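(* With notation as in the context, let $\mathcal A_y$ be the $*$-subalgebra of $\mathcal A$ generated by $C_K(X)$ and $C_{c,K}(X\setminus\{y\})\,t$. Then $\mathcal A_\infty=\mathcal A_y$.
   Context: Let $X$ be an infinite, totally disconnected, compact metrizable space, $T$ a homeomorphism, $K$ a field with involution, $C_K(X)$ the $*$-algebra of locally constant functions $X\to K$, $\mathcal A=C_K(X)\rtimes_T\mathbb Z$ the algebraic crossed product (finite sums $\sum f_it^i$, $tf=(f\circ T^{-1})t$, $(ft^i)^*=t^{-i}f^*$). For an open $U\subseteq X$, $C_{c,K}(U)$ is the ideal of $C_K(X)$ generated (equivalently, spanned) by the $\chi_V$ with $V\subseteq U$ clopen. Fix $y\in X$, a decreasing sequence of clopen sets $E_n$ with $\bigcap_nE_n=\{y\}$, and partitions $\mathcal P_n$ of $X\setminus E_n$ (finite families of nonempty pairwise disjoint clopen sets with union $X\setminus E_n$) such that each member of $\mathcal P_{n+1}\cup\{E_{n+1}\}$ lies in a member of $\mathcal P_n\cup\{E_n\}$ and $\bigcup_n(\mathcal P_n\cup\{E_n\})$ generates the topology of $X$. $\mathcal A_n$ is the unital $*$-subalgebra of $\mathcal A$ generated by $\{\chi_Zt:Z\in\mathcal P_n\}$ and $\mathcal A_\infty=\bigcup_n\mathcal A_n$. *)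

(* Defs.v *)
From Stdlib Require Rdefinitions.
From Stdlib Require Import ClassicalEpsilon.
From HB Require Import structures.
From mathcomp Require Import all_boot all_order all_algebra.
Set Implicit Arguments. Unset Strict Implicit. Unset Printing Implicit Defensive.
Import GRing.Theory.

Section Topology.
Variable X : Type.
Variable op : (X -> Prop) -> Prop.

Definition is_topology : Prop :=
  [/\ op (fun _ => True),
      (forall U V, op U -> op V -> op (fun x => U x /\ V x)) &
      (forall F : (X -> Prop) -> Prop, (forall U, F U -> op U) ->
         op (fun x => exists2 U, F U & U x))].

Definition clopen (V : X -> Prop) : Prop := op V /\ op (fun x => ~ V x).

Definition compact : Prop :=
  forall F : (X -> Prop) -> Prop, (forall U, F U -> op U) ->
    (forall x, exists2 U, F U & U x) ->
    exists (n : nat) (U : 'I_n -> X -> Prop),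
      (forall i, F (U i)) /\ (forall x, exists i, U i x).

Definition metrizable : Prop :=
  exists d : X -> X -> Rdefinitions.R,
    [/\ (forall x y, d x y = Rdefinitions.R0 <-> x = y),
        (forall x y, d x y = d y x),
        (forall x y z, Rdefinitions.Rle (d x z) (Rdefinitions.Rplus (d x y) (d y z))) &
        (forall U, op U <->
           (forall x, U x -> exists eps, Rdefinitions.Rlt Rdefinitions.R0 eps /\
              (forall z, Rdefinitions.Rlt (d x z) eps -> U z)))].

Definition connected_subset (S : X -> Prop) : Prop :=
  ~ exists U V, op U /\ op V /\ [/\
      (forall x, S x -> U x \/ V x),
      (exists x, S x /\ U x), (exists x, S x /\ V x) &
      (forall x, ~ [/\ S x, U x & V x])].

Definition totally_disconnected : Prop :=
  forall S, connected_subset S -> forall x y, S x -> S y -> x = y.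

Definition infinite_type : Prop :=
  ~ exists (n : nat) (f : 'I_n -> X), forall x, exists i, f i = x.

Definition generates_topology (B : (X -> Prop) -> Prop) : Prop :=
  forall U, op U <->
    (forall x, U x -> exists (n : nat) (W : 'I_n -> X -> Prop),
       [/\ (forall i, B (W i)), (forall i, W i x) &
           (forall z, (forall i, W i z) -> U z)]).

End Topology.

Definition continuous (X Y : Type) (opX : (X -> Prop) -> Prop)
  (opY : (Y -> Prop) -> Prop) (f : X -> Y) : Prop :=
  forall V, opY V -> opX (fun x => V (f x)).

Definition locally_constant (X : Type) (op : (X -> Prop) -> Prop)
  (K : Type) (f : X -> K) : Prop :=
  forall x, exists U, [/\ op U, U x & forall z, U z -> f z = f x].

Definition chi (X : Type) (K : nzRingType) (V : X -> Prop) : X -> K :=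
  fun x => if excluded_middle_informative (V x) then 1%R else 0%R.

(* C_{c,K}(U): the span of the chi_V with V clopen, V inside U *)
Definition in_CcK (X : Type) (op : (X -> Prop) -> Prop) (K : nzRingType)
  (U : X -> Prop) (f : X -> K) : Prop :=
  exists (n : nat) (c : 'I_n -> K) (V : 'I_n -> X -> Prop),
    [/\ (forall i, clopen op (V i)), (forall i x, V i x -> U x) &
        (forall x, f x = \sum_(i < n) c i * chi K (V i) x)%R].

Definition inF (X : Type) (s : seq (X -> Prop)) (Z : X -> Prop) : Prop :=
  exists2 i : nat, (i < size s) & Z = nth (fun _ => False) s i.

Definition is_partition (X : Type) (op : (X -> Prop) -> Prop)
  (s : seq (X -> Prop)) (W : X -> Prop) : Prop :=
  [/\ (forall Z, inF s Z -> clopen op Z /\ exists x, Z x),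
      (forall i j : nat, (i < size s) -> (j < size s) -> i != j ->
         forall x, ~ (nth (fun _ => False) s i x /\ nth (fun _ => False) s j x)) &
      (forall x, W x <-> exists2 Z, inF s Z & Z x)].

(* An element sum_i f_i t^i is represented by a finite list of monomials
   (i, f_i); two lists represent the same element iff they have the same
   coefficient functions [coef]. *)
Section CrossedProduct.
Variables (X : Type) (K : fieldType) (bar : K -> K) (T Tinv : X -> X).

Definition Tpow (i : int) : X -> X :=
  match i with
  | Posz n => iter n T
  | Negz n => iter n.+1 Tinv
  end.

Definition cp := seq (int * (X -> K)).

Definition coef (a : cp) (n : int) (x : X) : K :=
  (\sum_(m <- a) (if m.1 == n then m.2 x else 0))%R.

Definition cp_one : cp := [:: (0%Z, fun _ => 1%R)].
Definition cp_add (a b : cp) : cp := a ++ b.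
Definition cp_scale (c : K) (a : cp) : cp := [seq (m.1, fun x => (c * m.2 x)%R) | m <- a].
(* (f t^i)(g t^j) = f (g o T^{-i}) t^{i+j} *)
Definition cp_mul (a b : cp) : cp :=
  [seq ((m.1 + p.1)%R, fun x => (m.2 x * p.2 (Tpow (- m.1)%R x))%R) | m <- a, p <- b].
(* (f t^i)^* = t^{-i} f^* = (f^* o T^i) t^{-i} *)
Definition cp_star (a : cp) : cp :=
  [seq ((- m.1)%R, fun x => bar (m.2 (Tpow m.1 x))) | m <- a].

(* the unital *-subalgebra generated by G (closed under the equivalence
   "same coefficients", i.e. a subset of the crossed product itself) *)
Inductive gen_star_alg (G : cp -> Prop) : cp -> Prop :=
| gsa_gen a : G a -> gen_star_alg G a
| gsa_one : gen_star_alg G cp_one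
| gsa_add a b : gen_star_alg G a -> gen_star_alg G b -> gen_star_alg G (cp_add a b)
| gsa_scale c a : gen_star_alg G a -> gen_star_alg G (cp_scale c a)
| gsa_mul a b : gen_star_alg G a -> gen_star_alg G b -> gen_star_alg G (cp_mul a b)
| gsa_star a : gen_star_alg G a -> gen_star_alg G (cp_star a)
| gsa_eq a b : gen_star_alg G a -> (forall n x, coef a n x = coef b n x) ->
               gen_star_alg G b.

End CrossedProduct.

(* Main.v *)
Require Import Defs.
From HB Require Import structures.
From Stdlib Require Import ClassicalEpsilon Classical.
From mathcomp Require Import all_boot all_order all_algebra.
Set Implicit Arguments. Unset Strict Implicit. Unset Printing Implicit Defensive.
Import GRing.Theory.
Local Open Scope ring_scope.

Section CP.
Variables (X : Type) (K : fieldType) (bar : K -> K) (T Tinv : X -> X).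
Hypothesis HT2 : cancel Tinv T.
Hypothesis Hbar_add : forall a b, bar (a + b) = bar a + bar b.
Hypothesis Hbar_one : bar 1 = 1.
Variable G : cp X K -> Prop.
Local Notation S := (gen_star_alg bar T Tinv G).

Lemma coef1 (i : int) (f : X -> K) n x : coef [:: (i,f)] n x = if i == n then f x else 0.
Proof. by rewrite /coef big_cons big_nil addr0. Qed.

Lemma S_ext i f g : S [::(i,f)] -> (forall x, f x = g x) -> S [::(i,g)].
Proof.
move=> H E; apply: (gsa_eq H) => n x; rewrite !coef1 E //.
Qed.

Lemma S_add i f g : S [::(i,f)] -> S [::(i,g)] -> S [::(i, fun x => f x + g x)].
Proof.
move=> Hf Hg; apply: (gsa_eq (gsa_add Hf Hg)) => n x.
rewrite /cp_add /coef big_cat /= !big_cons !big_nil !addr0.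
by case: (i == n); rewrite ?addr0.
Qed.

Lemma S_mul0 i f g : S [::(0%Z,f)] -> S [::(i,g)] -> S [::(i, fun x => f x * g x)].
Proof.
move=> Hf Hg; apply: (gsa_eq (gsa_mul Hf Hg)) => n x.
rewrite /cp_mul /= !coef1 add0r //.
Qed.

Lemma S_const c : S [::(0%Z, fun _ => c)].
Proof.
apply: (S_ext (gsa_scale c (gsa_one _ _ _ _))) => x; exact: mulr1.
Qed.

Lemma S_zero i : S [::(i, fun _ => 0)].
Proof.
apply: (gsa_eq (S_const 0)) => n x; rewrite !coef1; by case: ifP; case: ifP.
Qed.

Lemma S_sum i n (F : 'I_n -> X -> K) : (forall j, S [::(i, F j)]) ->
  S [::(i, fun x => \sum_(j<n) F j x)].
Proof.
elim: n F => [|n IH] F HF.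
  by apply: (S_ext (S_zero i)) => x; rewrite big_ord0.
apply: (S_ext (S_add (IH _ (fun j => HF (widen_ord (leqnSn n) j))) (HF ord_max))).
by move=> x; rewrite big_ord_recr.
Qed.

Lemma bar0 : bar 0 = 0.
Proof. have := Hbar_add 0 0; rewrite addr0 => /(congr1 (fun z => z - bar 0)). by rewrite subrr addrK. Qed.

Lemma S_deg1_deg0 f : S [::(1%Z, f)] -> (forall x, f x = 0 \/ f x = 1) -> S [::(0%Z, f)].
Proof.
move=> H H01; apply: (gsa_eq (gsa_mul H (gsa_star H))) => n x.
rewrite /cp_mul /cp_star /= !coef1 /= HT2.
by case: ifP => //; case: (H01 x) => ->; rewrite ?bar0 ?Hbar_one ?mulr0 ?mulr1.
Qed.
End CP.
Lemma chi_in (X : Type) (K : fieldType) (V : X -> Prop) x : V x -> chi K V x = 1.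
Proof. by rewrite /chi; case: excluded_middle_informative. Qed.
Lemma chi_out (X : Type) (K : fieldType) (V : X -> Prop) x : ~ V x -> chi K V x = 0.
Proof. by rewrite /chi; case: excluded_middle_informative. Qed.
Lemma chi01 (X : Type) (K : fieldType) (V : X -> Prop) x : chi K V x = 0 \/ chi K V x = 1.
Proof. by rewrite /chi; case: excluded_middle_informative; auto. Qed.

Lemma max_exists k (Q : 'I_k -> nat -> Prop) : (forall i, exists n, Q i n) ->
  exists M, forall i, exists2 n, (n <= M)%N & Q i n.
Proof.
elim: k Q => [|k IH] Q HQ; first by exists 0%N => -[].
have [M HM] := IH (fun j => Q (lift ord_max j)) (fun j => HQ _).
have [n0 Hn0] := HQ ord_max.
exists (maxn M n0) => i; case: (unliftP ord_max i) => [j ->|->].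
  have [n Hn HQn] := HM j; exists n => //; exact: (leq_trans Hn (leq_maxl _ _)).
by exists n0 => //; exact: leq_maxr.
Qed.

Section Topo.
Variables (X : Type) (op : (X -> Prop) -> Prop).
Hypothesis Htop : is_topology op.
Hypothesis Hcpt : compact op.
Variables (T Tinv : X -> X) (K : fieldType) (bar : K -> K).
Hypothesis HT2 : cancel Tinv T.
Hypothesis Hbar_add : forall a b, bar (a + b) = bar a + bar b.
Hypothesis Hbar_one : bar 1 = 1.
Variables (y : X) (E : nat -> X -> Prop) (P : nat -> seq (X -> Prop)).
Hypothesis HEclopen : forall n, clopen op (E n).
Hypothesis HEdecr : forall n x, E n.+1 x -> E n x.
Hypothesis HEcap : forall x, (forall n, E n x) <-> x = y.
Hypothesis HPpart : forall n, is_partition op (P n) (fun x => ~ E n x).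
Hypothesis HPrefine : forall n Z, (inF (P n.+1) Z \/ Z = E n.+1) ->
     exists2 W, (inF (P n) W \/ W = E n) & (forall x, Z x -> W x).
Hypothesis HPgen : generates_topology op (fun Z => exists n, inF (P n) Z \/ Z = E n).

Local Notation lvl m Z := (inF (P m) Z \/ Z = E m).
Local Notation Pj m j := (nth (fun _ => False) (P m) j).
Local Notation A m := (gen_star_alg bar T Tinv
        (fun a => exists2 Z, inF (P m) Z & a = [:: (1%Z, chi K Z)])).

Lemma E_decr n m x : (n <= m)%N -> E m x -> E n x.
Proof.
elim: m => [|m IH]; first by rewrite leqn0 => /eqP ->.
rewrite leq_eqVlt => /orP [/eqP -> //| Hlt] Hx; apply: IH => //; exact: HEdecr.
Qed.

Lemma inF_notE m Z x : inF (P m) Z -> Z x -> ~ E m x.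
Proof.
move=> HZ Zx; have [_ _ H3] := HPpart m; apply/H3; by exists Z.
Qed.

Lemma lvl_open m Z : lvl m Z -> op Z.
Proof.
case=> [HZ|->]; last exact: (HEclopen m).1.
have [H1 _ _] := HPpart m; exact: (H1 Z HZ).1.1.
Qed.

Lemma lvl_cover m x : exists2 Z, lvl m Z & Z x.
Proof.
case: (classic (E m x)) => Hx; first by exists (E m); auto.
have [_ _ H3] := HPpart m; have [Z HZ Zx] := (H3 x).1 Hx; by exists Z; auto.
Qed.

Lemma lvl_disj m Z W x : lvl m Z -> lvl m W -> Z x -> W x -> Z = W.
Proof.
have [_ H2 _] := HPpart m.
case=> [HZ|->]; case=> [HW|->] // Zx Wx.
- case: HZ Zx => i Hi -> Zx; case: HW Wx => j Hj -> Wx.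
  case: (eqVneq i j) => [->//|Hij]; exfalso; exact: (H2 i j Hi Hj Hij x (conj Zx Wx)).
- by exfalso; exact: (inF_notE HZ Zx).
- by exfalso; exact: (inF_notE HW Wx).
Qed.

Lemma lvl_up n d Z : lvl (n + d) Z -> exists2 W, lvl n W & forall x, Z x -> W x.
Proof.
elim: d Z => [|d IH] Z; first by rewrite addn0 => HZ; exists Z.
rewrite addnS => /HPrefine [W HW ZW]; have [W' HW' WW'] := IH W HW.
by exists W' => // x /ZW /WW'.
Qed.

Lemma lvl_refine n m Z W z : (n <= m)%N -> lvl m Z -> lvl n W -> Z z -> W z ->
  forall x, Z x -> W x.
Proof.
move=> Hnm HZ HW Zz Wz; move: HZ; rewrite -(subnKC Hnm) => /lvl_up [W' HW' ZW'].
by rewrite -(lvl_disj HW' HW (ZW' _ Zz) Wz).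
Qed.

Lemma sum_part_out m x (F : 'I_(size (P m)) -> K) : E m x ->
  \sum_(j < size (P m)) F j * chi K (Pj m j) x = 0.
Proof.
move=> Ex; apply: big1 => j _; rewrite chi_out ?mulr0 // => Hj.
by apply: (inF_notE _ Hj Ex); exists j.
Qed.

Lemma sum_part_in m x : ~ E m x -> exists j0 : 'I_(size (P m)), Pj m j0 x /\
  forall F : 'I_(size (P m)) -> K, \sum_(j < size (P m)) F j * chi K (Pj m j) x = F j0.
Proof.
move=> Hx; have [_ H2 H3] := HPpart m; have [Z [i Hi ->] Zx] := (H3 x).1 Hx.
exists (Ordinal Hi); split => // F; rewrite (bigD1 (Ordinal Hi)) //= chi_in // mulr1.
rewrite big1 ?addr0 // => j Hj; rewrite chi_out ?mulr0 // => Hjx.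
have Hne : (nat_of_ord j != i) by apply: contra Hj => /eqP Hji; apply/eqP/val_inj.
exact: (H2 j i (ltn_ord j) Hi Hne x (conj Hjx Zx)).
Qed.

Lemma chi_in_A m (j : 'I_(size (P m))) : A m [:: (0%Z, chi K (Pj m j))].
Proof.
apply: S_deg1_deg0 => //; last exact: chi01.
apply: gsa_gen; exists (Pj m j) => //; by exists j.
Qed.

Lemma hm_in_A m : A m [::(1%Z, fun x => \sum_(j < size (P m)) 1 * chi K (Pj m j) x)].
Proof.
apply: S_sum => j; apply: (S_ext (f := chi K (Pj m j))); last by move=> x; rewrite mul1r.
apply: gsa_gen; exists (Pj m j) => //; by exists j.
Qed.


Lemma fun_in_A m (f : X -> K) :
  (forall Z, lvl m Z -> forall z w, Z z -> Z w -> f z = f w) -> A m [::(0%Z, f)].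
Proof.
move=> Hf.
pose p (j : 'I_(size (P m))) := epsilon (inhabits y) (fun x => Pj m j x).
have Hp (j : 'I_(size (P m))) : Pj m j (p j).
  apply: (epsilon_spec (inhabits y) (fun x => Pj m j x)).
  have [H1 _ _] := HPpart m; apply: (H1 (Pj m j) _).2; by exists j.
have H1 : A m [::(0%Z, fun x => \sum_(j < size (P m)) f (p j) * chi K (Pj m j) x)].
  by apply: S_sum => j; apply: S_mul0; [exact: S_const | exact: chi_in_A].
have H2 : A m [::(0%Z, fun x => \sum_(j < size (P m)) 1 * chi K (Pj m j) x)].
  by apply: S_sum => j; apply: S_mul0; [exact: S_const | exact: chi_in_A].
have H3 := S_mul0 (S_const _ _ _ _ (f y))
   (S_add (S_const _ _ _ _ 1) (S_mul0 (S_const _ _ _ _ (-1)) H2)).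
apply: (S_ext (S_add H1 H3)) => x.
have Ey : E m y by apply: (proj2 (HEcap y)).
case: (classic (E m x)) => Ex.
  rewrite !sum_part_out // mulr0 addr0 mulr1 add0r.
  by apply: (Hf (E m)) => //; right.
have [j0 [Hj0 HF]] := sum_part_in Ex; rewrite !HF mulr1 subrr mulr0 addr0.
by apply: (Hf (Pj m j0)) => //; left; exists j0.
Qed.

Local Notation lc := (locally_constant op).

Lemma lc_ext (f g : X -> K) : lc f -> (forall x, f x = g x) -> lc g.
Proof.
move=> Hf E' x; have [U [HU Ux HUf]] := Hf x; exists U; split => // z Uz.
by rewrite -!E' HUf.
Qed.

Lemma lc_const (c : K) : lc (fun _ => c).
Proof. move=> x; have [Ht _ _] := Htop; by exists (fun _ => True). Qed.

Lemma lc2 (o : K -> K -> K) (f g : X -> K) : lc f -> lc g -> lc (fun x => o (f x) (g x)).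
Proof.
move=> Hf Hg x; have [U [HU Ux HUf]] := Hf x; have [V [HV Vx HVg]] := Hg x.
have [_ Hi _] := Htop.
exists (fun z => U z /\ V z); split; [exact: Hi | by [] |].
by move=> z [Uz Vz]; rewrite HUf // HVg.
Qed.

Lemma lc_chi V : clopen op V -> lc (chi K V).
Proof.
move=> [HV HnV] x; case: (classic (V x)) => Vx.
  by exists V; split => // z Vz; rewrite !chi_in.
by exists (fun z => ~ V z); split => // z Vz; rewrite !chi_out.
Qed.

Lemma lc_sum n (F : 'I_n -> X -> K) : (forall i, lc (F i)) ->
  lc (fun x => \sum_(i < n) F i x).
Proof.
elim: n F => [|n IH] F HF.
  by apply: (lc_ext (lc_const 0)) => x; rewrite big_ord0.
apply: (lc_ext (lc2 +%R (IH _ (fun j => HF (widen_ord (leqnSn n) j))) (HF ord_max))).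
by move=> x; rewrite big_ord_recr.
Qed.

Lemma lc_in_A f : lc f -> exists m, A m [::(0%Z, f)].
Proof.
move=> Hf.
pose F B := exists n, lvl n B /\ forall z w, B z -> B w -> f z = f w.
have HFo : forall B, F B -> op B by move=> B [n [HB _]]; exact: lvl_open HB.
have HFc : forall x, exists2 B, F B & B x.
  move=> x; have [U [HU Ux HUf]] := Hf x.
  have [k [W [HW Wx WU]]] := (proj1 (HPgen U) HU) x Ux.
  have [N HN] := max_exists HW.
  have [B HB Bx] := lvl_cover N x.
  have BU : forall z, B z -> U z.
    move=> z Bz; apply: WU => i; have [n Hn HWi] := HN i.
    exact: (lvl_refine Hn HB HWi Bx (Wx i)).
  exists B => //; exists N; split => // z w Bz Bw.
  by rewrite (HUf _ (BU _ Bz)) (HUf _ (BU _ Bw)).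
have [k [U [HU Hcov]]] := Hcpt HFo HFc.
have [M HM] := max_exists (fun i => HU i).
exists M; apply: fun_in_A => Z HZ z w Zz Zw.
have [i Ui] := Hcov z; have [n Hn [HUi HUf]] := HM i.
have ZU := lvl_refine Hn HZ HUi Zz Ui.
exact: HUf (ZU _ Zz) (ZU _ Zw).
Qed.

Lemma nest n m a : (n <= m)%N -> A n a -> A m a.
Proof.
move=> Hnm; elim => {a}.
- move=> _ [Z HZ ->].
  have Hchi : A m [::(0%Z, chi K Z)].
    apply: fun_in_A => W HW z w Wz Ww.
    case: (classic (Z z)) => Zz.
      by rewrite !chi_in //; exact: (lvl_refine Hnm HW (or_introl HZ) Wz Zz Ww).
    case: (classic (Z w)) => Zw.
      by exfalso; apply: Zz; exact: (lvl_refine Hnm HW (or_introl HZ) Ww Zw Wz).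
    by rewrite !chi_out.
  apply: (S_ext (S_mul0 Hchi (hm_in_A m))) => x.
  case: (classic (Z x)) => Zx; last by rewrite chi_out // mul0r.
  have nEx : ~ E m x by move=> Ex; exact: (inF_notE HZ Zx (E_decr Hnm Ex)).
  by have [j0 [_ ->]] := sum_part_in nEx; rewrite mulr1.
- exact: gsa_one.
- by move=> a b _ Ha _ Hb; apply: gsa_add.
- by move=> c a _ Ha; apply: gsa_scale.
- by move=> a b _ Ha _ Hb; apply: gsa_mul.
- by move=> a _ Ha; apply: gsa_star.
- by move=> a b _ Ha Hab; apply: gsa_eq Ha Hab.
Qed.

Lemma clopen_avoid V : clopen op V -> ~ V y -> exists N, forall x, E N x -> ~ V x.
Proof.
move=> [HV HnV] nVy.
pose F U := U = (fun x => ~ V x) \/ exists n, U = (fun x => ~ E n x).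
have HFo : forall U, F U -> op U.
  by move=> U [->|[n ->]] //; exact: (HEclopen n).2.
have HFc : forall x, exists2 U, F U & U x.
  move=> x; case: (classic (V x)) => Vx; last by exists (fun x => ~ V x); [left|].
  have : ~ (forall n, E n x) by move=> /HEcap Hxy; apply: nVy; rewrite -Hxy.
  move=> /not_all_ex_not [n Hn]; exists (fun x => ~ E n x) => //; right; by exists n.
have [k [U [HU Hcov]]] := Hcpt HFo HFc.
have HQ : forall i, exists n, U i = (fun x => ~ V x) \/ U i = (fun x => ~ E n x).
  move=> i; case: (HU i) => [->|[n ->]]; [by exists 0%N; left | by exists n; right].
have [N HN] := max_exists HQ.
exists N => x ENx Vx; have [i Ui] := Hcov x; have [n Hn [HUi|HUi]] := HN i;
  rewrite HUi in Ui; first exact: Ui.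
exact: Ui (E_decr Hn ENx).
Qed.

Lemma Ay_gen2 g : in_CcK op (fun x => x <> y) g -> exists m, A m [::(1%Z, g)].
Proof.
move=> [k [c [V [HV HVy Hg]]]].
have Hlc : lc g.
  apply: (lc_ext (lc_sum (fun i => lc2 *%R (lc_const (c i)) (lc_chi (HV i))))).
  by move=> x; rewrite Hg.
have [m1 Hm1] := lc_in_A Hlc.
have HQ : forall i, exists N, forall x, E N x -> ~ V i x.
  move=> i; apply: clopen_avoid => // Vy; exact: (HVy i y Vy).
have [N HN] := max_exists HQ.
exists (maxn m1 N).
have H0 := nest (leq_maxl m1 N) Hm1.
apply: (S_ext (S_mul0 H0 (hm_in_A _))) => x.
case: (classic (E (maxn m1 N) x)) => Ex.
  rewrite Hg big1 ?mul0r // => i _; rewrite chi_out ?mulr0 //.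
  have [n Hn HNn] := HN i; apply: HNn; apply: (E_decr _ Ex).
  exact: (leq_trans Hn (leq_maxr _ _)).
by have [j0 [_ ->]] := sum_part_in Ex; rewrite mulr1.
Qed.

Lemma A_in_Ay n a : A n a -> gen_star_alg bar T Tinv
        (fun a => (exists2 f, locally_constant op f & a = [:: (0%Z, f)]) \/
                  (exists2 g, in_CcK op (fun x => x <> y) g & a = [:: (1%Z, g)])) a.
Proof.
elim => {a}.
- move=> _ [Z HZ ->]; apply: gsa_gen; right; exists (chi K Z) => //.
  exists 1%N, (fun _ => 1), (fun _ => Z); split.
  + by move=> _; have [H1 _ _] := HPpart n; exact: (H1 Z HZ).1.
  + move=> _ x Zx Exy; apply: (inF_notE HZ Zx); rewrite Exy; exact: (proj2 (HEcap y)).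
  + by move=> x; rewrite big_ord_recl big_ord0 addr0 mul1r.
- exact: gsa_one.
- by move=> a b _ Ha _ Hb; apply: gsa_add.
- by move=> c a _ Ha; apply: gsa_scale.
- by move=> a b _ Ha _ Hb; apply: gsa_mul.
- by move=> a _ Ha; apply: gsa_star.
- by move=> a b _ Ha Hab; apply: gsa_eq Ha Hab.
Qed.

End Topo.
Unset Implicit Arguments.
Theorem lemma4p3
  (X : Type) (op : (X -> Prop) -> Prop)
  (Htop : is_topology op) (Hinf : infinite_type X)
  (Htd : totally_disconnected op) (Hcpt : compact op) (Hmet : metrizable op)
  (T Tinv : X -> X) (HT1 : cancel T Tinv) (HT2 : cancel Tinv T)
  (HTc : continuous op op T) (HTic : continuous op op Tinv)
  (K : fieldType) (bar : K -> K)
  (Hbar_add : forall a b, bar (a + b) = bar a + bar b)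
  (Hbar_mul : forall a b, bar (a * b) = bar a * bar b)
  (Hbar_one : bar 1 = 1) (Hbar_inv : involutive bar)
  (y : X) (E : nat -> X -> Prop) (P : nat -> seq (X -> Prop))
  (HEclopen : forall n, clopen op (E n))
  (HEdecr : forall n x, E n.+1 x -> E n x)
  (HEcap : forall x, (forall n, E n x) <-> x = y)
  (HPpart : forall n, is_partition op (P n) (fun x => ~ E n x))
  (HPrefine : forall n Z, (inF (P n.+1) Z \/ Z = E n.+1) ->
     exists2 W, (inF (P n) W \/ W = E n) & (forall x, Z x -> W x))
  (HPgen : generates_topology op (fun Z => exists n, inF (P n) Z \/ Z = E n)) :
  let A_n (n : nat) := gen_star_alg bar T Tinv
        (fun a => exists2 Z, inF (P n) Z & a = [:: (1%Z, chi K Z)]) in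
  let A_y := gen_star_alg bar T Tinv
        (fun a => (exists2 f, locally_constant op f & a = [:: (0%Z, f)]) \/
                  (exists2 g, in_CcK op (fun x => x <> y) g & a = [:: (1%Z, g)])) in
  forall a : cp X K, (exists n, A_n n a) <-> A_y a.
Proof.
move=> A_n A_y a; rewrite /A_n /A_y; split.
  by move=> [n Hn]; apply: (A_in_Ay HEcap HPpart Hn).
elim => {a}.
- move=> a [[f Hf ->]|[g Hg ->]].
    exact: (lc_in_A Hcpt HT2 Hbar_add Hbar_one HEclopen HEcap HPpart HPrefine HPgen Hf).
  exact: (Ay_gen2 Htop Hcpt HT2 Hbar_add Hbar_one HEclopen HEdecr HEcap HPpart HPrefine HPgen Hg).
- exists 0%N; exact: gsa_one.
- move=> a b _ [n Ha] _ [m Hb]; exists (maxn n m); apply: gsa_add.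
    exact: (nest HT2 Hbar_add Hbar_one HEdecr HEcap HPpart HPrefine (leq_maxl n m) Ha).
  exact: (nest HT2 Hbar_add Hbar_one HEdecr HEcap HPpart HPrefine (leq_maxr n m) Hb).
- move=> c a _ [n Ha]; exists n; exact: (gsa_scale c Ha).
- move=> a b _ [n Ha] _ [m Hb]; exists (maxn n m); apply: gsa_mul.
    exact: (nest HT2 Hbar_add Hbar_one HEdecr HEcap HPpart HPrefine (leq_maxl n m) Ha).
  exact: (nest HT2 Hbar_add Hbar_one HEdecr HEcap HPpart HPrefine (leq_maxr n m) Hb).
- move=> a _ [n Ha]; exists n; exact: (gsa_star Ha).
- move=> a b _ [n Ha] Hab; exists n; exact: (gsa_eq Ha Hab).
Qed.
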